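(* Let $1\le k\le n$ and $\rho=\sum_{i=0}^k\lambda_i|D_n^i\rangle\langle D_n^i|$ with $\lambda_i\ge0$, $\sum_{i=0}^k\lambda_i=1$. If there exists $i_*\in\{0,\dots,k\}$ such that $k-i_*$ is even and $\lambda_{i_*}=0$, then $L(\rho)\le k$.
   Context: Dicke states: $|D_n^i\rangle=\binom{n}{i}^{-1/2}\sum_{s\in\{0,1\}^n,\ \sum_js_j=i}|s_1\rangle\otimes\cdots\otimes|s_n\rangle$. For $S\subseteq[n]$, $\rho_S$ is the partial trace of $\rho$ over qubits outside $S$; $\mathcal C(\rho,\mathcal S)=\{\sigma\text{ density matrix}:\sigma_S=\rho_S\ \forall S\in\mathcal S\}$; $\mathcal S$ determines $\rho$ if $\mathcal C(\rho,\mathcal S)=\{\rho\}$; $L(\rho)=\min_{\mathcal S\text{ determines }\rho}\max_{S\in\mathcal S}|S|$. *)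

(* Defs.v *)
(* Scalars: an arbitrary numClosedFieldType C (e.g. algC, or
   complex R); "x >= 0" in C means x is real and nonnegative. *)
From mathcomp Require Import all_boot all_order all_algebra.
From mathcomp Require Import boolp.
Set Implicit Arguments. Unset Strict Implicit. Unset Printing Implicit Defensive.
Import Order.TTheory GRing.Theory Num.Theory.
Local Open Scope ring_scope.

(* computational basis of n qubits: bitstrings s = (s_1,...,s_n) *)
Definition bits (n : nat) := {ffun 'I_n -> bool}.

(* operators on (C^2)^{\otimes n}, given by their matrix entries <s|M|t> *)
Definition op (C : numClosedFieldType) (n : nat) := bits n -> bits n -> C.

Definition weight n (s : bits n) : nat := #|[set j | s j]|.

Definition dicke (C : numClosedFieldType) (n i : nat) (s : bits n) : C :=
  if weight s == i then (sqrtC ('C(n, i)%:R : C))^-1 else 0.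

Definition proj (C : numClosedFieldType) n (psi : bits n -> C) : op C n :=
  fun s t => psi s * (psi t)^*.

Definition dicke_mix (C : numClosedFieldType) (n k : nat) (lam : nat -> C) : op C n :=
  fun s t => \sum_(i < k.+1) lam i * proj (@dicke C n i) s t.

Definition density (C : numClosedFieldType) n (M : op C n) : Prop :=
  [/\ (forall s t, M t s = (M s t)^*),
      (forall v : bits n -> C, 0 <= \sum_s \sum_t (v s)^* * M s t * v t)
    & \sum_s M s s = 1].

Definition merge n (S : {set 'I_n}) (s c : bits n) : bits n :=
  [ffun j => if j \in S then s j else c j].

(* The reduced operator rho_S acts on
   the qubits in S; its entry <a|rho_S|b> (a, b assignments of the qubits in S)
   is recorded as  ptrace S M s t  for any s, t restricting to a, b on S
   (the value only depends on the restrictions).  The sum runs over all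
   assignments c of the qubits outside S (c normalized to false on S). *)
Definition ptrace (C : numClosedFieldType) n (S : {set 'I_n}) (M : op C n) : op C n :=
  fun s t => \sum_(c : bits n | [forall j in S, c j == false])
               M (merge S s c) (merge S t c).

Definition determines (C : numClosedFieldType) n (rho : op C n)
  (F : {set {set 'I_n}}) : Prop :=
  forall sigma : op C n, density sigma ->
    (forall S, S \in F -> forall s t, ptrace S sigma s t = ptrace S rho s t) ->
    forall s t, sigma s t = rho s t.

(* L(rho) = min over determining families F of max_{S in F} |S|.
   The default value n of the min is never reached: the family {[n]} always
   determines rho. *)
Definition L (C : numClosedFieldType) n (rho : op C n) : nat :=
  \big[minn/n]_(F : {set {set 'I_n}} | `[< determines rho F >])
     \max_(S in F) #|S|.

(* Main.v *)
Require Import Defs.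
From mathcomp Require Import all_boot all_order all_algebra all_fingroup.
From mathcomp Require Import boolp ring lra zify.
Set Implicit Arguments. Unset Strict Implicit. Unset Printing Implicit Defensive.
Import Order.TTheory GRing.Theory Num.Theory.
Local Open Scope ring_scope.
Local Notation merge := Defs.merge.

Definition Salt (N r : nat) : int := \sum_(l < r.+1) (-1)^+l * ('C(N,l))%:Z.

Lemma Salt0 r : Salt 0 r = 1.
Proof.
rewrite /Salt big_ord_recl /= expr0 mul1r bin0 big1 ?addr0 // => l _.
by rewrite bin0n mulr0.
Qed.

Lemma SaltS N r : Salt N.+1 r = (-1)^+r * ('C(N,r))%:Z.
Proof.
elim: r => [|r IH]; first by rewrite /Salt big_ord1 /= !expr0 !bin0.
rewrite /Salt big_ord_recr /= -/(Salt N.+1 r) IH binS PoszD exprS.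
ring.
Qed.

Lemma binid i j m : (i <= j)%N -> ('C(j,i) * 'C(m,j) = 'C(m,i) * 'C(m-i,j-i))%N.
Proof.
move=> hij.
case: (leqP j m) => hjm; last first.
  rewrite (bin_small hjm) muln0.
  case: (leqP i m) => him; last by rewrite (bin_small him).
  by rewrite (@bin_small (m-i) (j-i)) ?muln0 //; lia.
have h1 := bin_fact hjm.
have h2 := bin_fact hij.
have him : (i <= m)%N by lia.
have h3 := bin_fact him.
have hji : (j - i <= m - i)%N by lia.
have h4 := bin_fact hji.
have e1 : (m - i - (j - i) = m - j)%N by lia.
rewrite e1 in h4.
apply/eqP; rewrite -(eqn_pmul2r (_ : 0 < i`! * (j-i)`! * (m-j)`!)%N);
  last by rewrite !muln_gt0 !fact_gt0.
apply/eqP.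
transitivity (m`!).
  rewrite -h1 -h2; ring.
rewrite -h3 -h4; ring.
Qed.

Section F.
Variables (i k : nat).
Definition cf (j : nat) : int := if (i <= j)%N then (-1)^+(j-i) * ('C(j,i))%:Z else 0.
Definition ff (m : nat) : int := \sum_(j < k.+1) cf j * ('C(m,j))%:Z.

Lemma ff_eq m : (i <= k)%N -> ff m = ('C(m,i))%:Z * Salt (m - i) (k - i).
Proof.
move=> hik.
rewrite /ff -(big_mkord xpredT (fun j => cf j * ('C(m,j))%:Z)).
rewrite (big_cat_nat (n := i)) //=; last by lia.
rewrite big_nat_cond big1 ?add0r; last first.
  by move=> j /andP[/andP[_ hj] _]; rewrite /cf leqNgt hj /= mul0r.
rewrite (_ : \sum_(i <= j < k.+1) cf j * ('C(m,j))%:Z = \sum_(0 + i <= j < k.+1) cf j * ('C(m,j))%:Z) //.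
rewrite big_addn (_ : (k.+1 - i = (k - i).+1)%N); last by lia.
rewrite big_mkord /Salt big_distrr /=; apply: eq_bigr => l _.
rewrite /cf leq_addl addnK -mulrA -PoszM (binid _ (leq_addl _ _)) addnK PoszM; ring.
Qed.

Hypothesis hik : (i <= k)%N.
Hypothesis hev : ~~ odd (k - i).

Lemma ff_i : ff i = 1.
Proof. by rewrite ff_eq // subnn Salt0 binn mulr1. Qed.

Lemma ff_small m : (m <= k)%N -> m != i -> ff m = 0.
Proof.
move=> hm hmi; rewrite ff_eq //.
case: (ltnP m i) => h; first by rewrite bin_small // mul0r.
have -> : (m - i = (m - i).-1.+1)%N by lia.
by rewrite SaltS (@bin_small (m-i).-1 (k-i)) ?mulr0 //; lia.
Qed.

Lemma ff_big m : (k < m)%N -> 0 < ff m.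
Proof.
move=> hm; rewrite ff_eq //.
have -> : (m - i = (m - i).-1.+1)%N by lia.
rewrite SaltS -signr_odd (negbTE hev) expr0 mul1r -PoszM ltz_nat muln_gt0.
by rewrite !bin_gt0; apply/andP; split; lia.
Qed.

Lemma ff_ge0 m : 0 <= ff m.
Proof.
case: (ltnP k m) => hm; first exact: ltW (ff_big hm).
case: (eqVneq m i) => [->|hmi]; first by rewrite ff_i.
by rewrite ff_small.
Qed.
End F.

Section Bits.
Variable n : nat.
Implicit Types (S : {set 'I_n}) (s t w c p : bits n).

Definition strip S w : bits n := [ffun j => if j \in S then false else w j].

Lemma sum_merge (R : zmodType) S s (H : bits n -> R) :
  \sum_(c : bits n | [forall j in S, c j == false]) H (merge S s c) =
  \sum_(w : bits n | [forall j in S, w j == s j]) H w.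
Proof.
rewrite [RHS](reindex_onto (merge S s) (strip S)); last first.
  move=> w /forall_inP hw; apply/ffunP => j; rewrite !ffunE.
  by case: (boolP (j \in S)) => jS //; rewrite (eqP (hw j jS)).
apply: eq_bigl => c; apply/idP/idP.
  move=> /forall_inP hc; apply/andP; split.
    by apply/forall_inP => j jS; rewrite ffunE jS.
  apply/eqP/ffunP => j; rewrite !ffunE; case: (boolP (j \in S)) => jS //.
  by rewrite (eqP (hc j jS)).
move=> /andP[_ /eqP <-]; apply/forall_inP => j jS.
by rewrite ffunE jS.
Qed.

Definition restr S w : bits n := [ffun j => (j \in S) && w j].

Lemma sum_part (R : zmodType) S (G : bits n -> R) :
  \sum_(w : bits n) G w = \sum_(p : bits n | [forall j, (j \notin S) ==> ~~ p j])
      \sum_(c : bits n | [forall j in S, c j == false]) G (merge S p c).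
Proof.
rewrite (partition_big (restr S) (fun p => [forall j, (j \notin S) ==> ~~ p j])); last first.
  by move=> w _; apply/forallP => j; rewrite ffunE; case: (j \in S).
apply: eq_bigr => p /forallP hp; rewrite sum_merge; apply: eq_bigl => w /=.
apply/eqP/forall_inP.
  by move=> <- j jS; rewrite ffunE jS.
move=> hw; apply/ffunP => j; rewrite ffunE.
case: (boolP (j \in S)) => jS /=; first by rewrite (eqP (hw j jS)).
by have := hp j; rewrite jS /= => /negbTE ->.
Qed.

Lemma weight_merge S (u c : bits n) : (forall j, u j -> j \in S) ->
  [forall j in S, c j == false] -> weight (merge S u c) = (weight u + weight c)%N.
Proof.
move=> hu /forall_inP hc; rewrite /weight.
have -> : [set j | merge S u c j] = [set j | u j] :|: [set j | c j].
  apply/setP => j; rewrite !inE ffunE.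
  case: (boolP (j \in S)) => jS; first by rewrite (eqP (hc j jS)) orbF.
  by case: (boolP (u j)) => // /hu; rewrite (negbTE jS).
rewrite cardsU.
have -> : [set j | u j] :&: [set j | c j] = set0.
  apply/setP => j; rewrite !inE; apply/negbTE; apply/nandP.
  case: (boolP (u j)) => [/hu jS|]; last by left.
  by right; rewrite (eqP (hc j jS)).
by rewrite cards0 subn0.
Qed.

Lemma weight0 c : weight c = 0%N -> c = [ffun => false].
Proof.
move=> /eqP; rewrite /weight cards_eq0 => /eqP h.
apply/ffunP => j; rewrite ffunE; apply/negbTE/negP => cj.
by have := in_set0 j; rewrite -h inE cj.
Qed.

Definition sw (i j : 'I_n) w : bits n := [ffun l => w (tperm i j l)].

Lemma swK i j : involutive (sw i j).
Proof. by move=> w; apply/ffunP => l; rewrite !ffunE tpermK. Qed.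

Lemma weight_sw i j w : weight (sw i j w) = weight w.
Proof.
rewrite /weight.
have -> : [set l | sw i j w l] = tperm i j @^-1: [set l | w l].
  by apply/setP => l; rewrite !inE ffunE.
by rewrite card_preimset //; exact: (can_inj (tpermK i j)).
Qed.
End Bits.

Lemma sw_invariant n (R : Type) (g : bits n -> R) :
  (forall i j w, g (sw i j w) = g w) ->
  forall u u', weight u = weight u' -> g u = g u'.
Proof.
move=> hg u u' hw.
suff H : forall m (u : bits n), (#|[set l | u l != u' l]| <= m)%N -> weight u = weight u' -> g u = g u'.
  exact: H (leqnn _) hw.
elim=> [|m IH] {}u hm {}hw.
  have e : u = u'.
    apply/ffunP => l; apply/eqP; apply/negbNE/negP => hl.
    move: hm; rewrite leqn0 cards_eq0 => /eqP/setP/(_ l).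
    by rewrite !inE hl.
  by rewrite e.
case: (eqVneq u u') => [->//|hne].
set A := [set l | u l]; set B := [set l | u' l].
have hAB : A != B.
  apply: contra_neq hne => hAB; apply/ffunP => l.
  by move/setP: hAB => /(_ l); rewrite !inE; case: (u l); case: (u' l).
have cAB : #|A| = #|B| by exact: hw.
have [l1 l1A l1B] : exists2 l, l \in A & l \notin B.
  apply/subsetPn; apply: contra hAB => sAB.
  by rewrite eqEcard sAB cAB leqnn.
have [l2 l2B l2A] : exists2 l, l \in B & l \notin A.
  apply/subsetPn; apply: contra hAB => sBA.
  by rewrite eq_sym eqEcard sBA cAB leqnn.
move: l1A l1B l2B l2A; rewrite !inE => u1 u'1 u'2 u2.
have n12 : l1 != l2 by apply: contraNneq u2 => <-.
rewrite -(hg l1 l2 u); apply: IH; last by rewrite weight_sw.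
set D := [set l | u l != u' l] in hm.
have l1D : l1 \in D by rewrite inE (negbTE u'1) u1.
have sub : [set l | sw l1 l2 u l != u' l] \subset D :\ l1.
  apply/subsetP => x; rewrite !inE ffunE.
  case: (eqVneq x l1) => [->|hx1]; first by rewrite tpermL (negbTE u2) (negbTE u'1).
  case: (eqVneq x l2) => [->|hx2]; first by rewrite tpermR u1 u'2.
  by rewrite tpermD // eq_sym.
apply: leq_trans (subset_leq_card sub) _.
move: hm; rewrite (cardsD1 l1 D) l1D add1n ltnS //.
Qed.

Section QF.
Variables (C : numClosedFieldType) (n : nat) (M : op C n).

Definition qf (v1 v2 : bits n -> C) :=
  \sum_(s : bits n) \sum_(t : bits n) (v1 s)^* * M s t * v2 t.

Definition ev (u : bits n) : bits n -> C := fun x => if x == u then 1 else 0.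

Lemma sum_ev_l (u : bits n) (F : bits n -> C) : \sum_(x : bits n) ev u x * F x = F u.
Proof.
rewrite (bigD1 u) //= /ev eqxx mul1r big1 ?addr0 // => x /negbTE ->.
by rewrite mul0r.
Qed.

Lemma sum_ev_r (u : bits n) (F : bits n -> C) : \sum_(x : bits n) F x * ev u x = F u.
Proof. by under eq_bigr do rewrite mulrC; exact: sum_ev_l. Qed.

Lemma ev_conj u x : (ev u x)^* = ev u x.
Proof. by rewrite /ev; case: (x == u); rewrite ?rmorph1 ?rmorph0. Qed.

Lemma qf_e_l u v : qf (ev u) v = \sum_t M u t * v t.
Proof.
rewrite /qf (bigD1 u) //= [X in _ + X]big1 ?addr0.
  by apply: eq_bigr => t _; rewrite /ev eqxx rmorph1 mul1r.
move=> x hx; apply: big1 => t _; by rewrite /ev (negbTE hx) rmorph0 !mul0r.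
Qed.

Lemma qf_e_r v u : qf v (ev u) = \sum_s (v s)^* * M s u.
Proof. by apply: eq_bigr => s _; rewrite sum_ev_r. Qed.

Lemma qf_ee u u' : qf (ev u) (ev u') = M u u'.
Proof. by rewrite qf_e_l sum_ev_r. Qed.

Lemma qf_comb l c w e :
  qf (fun x => l * w x + c * e x) (fun x => l * w x + c * e x) =
  l^* * l * qf w w + l^* * c * qf w e + c^* * l * qf e w + c^* * c * qf e e.
Proof.
rewrite /qf !big_distrr -!big_split /=; apply: eq_bigr => s _.
rewrite !big_distrr -!big_split /=; apply: eq_bigr => t _.
rewrite !rmorphD !rmorphM /=; ring.
Qed.

Hypothesis herm : forall s t, M t s = (M s t)^*.
Hypothesis psd : forall v, 0 <= qf v v.

Lemma diag_ge0 u : 0 <= M u u.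
Proof. by rewrite -qf_ee. Qed.

Lemma psd_kernel w : qf w w = 0 -> forall s, \sum_t M s t * w t = 0.
Proof.
move=> hw s; set z := \sum_t M s t * w t.
set a := M s s.
have a0 : 0 <= a := diag_ge0 s.
have ac : a^* = a by rewrite conj_Creal // ger0_real.
have hwe : qf w (ev s) = z^*.
  rewrite qf_e_r /z rmorph_sum /=; apply: eq_bigr => t _.
  by rewrite rmorphM /= -herm mulrC.
have := psd (fun x => (a + 1) * w x + (- z) * ev s x).
rewrite qf_comb hw hwe qf_e_l -/z qf_ee -/a rmorphD /= ac rmorph1 rmorphN /=.
have -> : (a + 1) * (a + 1) * 0 + (a + 1) * - z * z^* + - z^* * (a + 1) * z + - z^* * - z * a
   = - ((a + 2) * (z * z^*)) by ring.
rewrite -normCK oppr_ge0 => h.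
have h2 : 0 <= (a + 2) * `|z| ^+ 2 by rewrite mulr_ge0 // ?addr_ge0 // exprn_ge0.
have : (a + 2) * `|z| ^+ 2 = 0 by apply/eqP; rewrite eq_le h h2.
move=> /eqP; rewrite mulf_eq0 => /orP[|].
  move=> /eqP ha; have : 0 < a + 2 by rewrite ltr_wpDl.
  by rewrite ha ltxx.
by rewrite expf_eq0 /= normr_eq0 => /eqP.
Qed.

End QF.

Section Rho.
Variables (C : numClosedFieldType) (n k : nat) (lam : nat -> C).

Definition dd (i : nat) : C := (sqrtC ('C(n, i)%:R : C))^-1 * ((sqrtC ('C(n, i)%:R : C))^-1)^*.

Lemma rho_eq (u v : bits n) : @dicke_mix C n k lam u v =
  if (weight u == weight v) && (weight u <= k)%N then lam (weight u) * dd (weight u) else 0.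
Proof.
rewrite /dicke_mix /proj /dicke.
case: (leqP (weight u) k) => hu; last first.
  rewrite andbF; apply: big1 => i _.
  have : weight u != i by rewrite neq_ltn (leq_ltn_trans _ hu) ?orbT // -ltnS.
  by move=> /negbTE ->; rewrite !mul0r mulr0.
rewrite andbT (bigD1 (Ordinal (hu : (weight u < k.+1)%N))) //= eqxx.
rewrite big1 ?addr0; last first.
  move=> i /eqP hi; have : weight u != i.
    by apply/eqP => e; apply: hi; apply/val_inj => /=.
  by move=> /negbTE ->; rewrite !mul0r mulr0.
case: (eqVneq (weight u) (weight v)) => [e|ne]; first by rewrite e. by rewrite conjC0 mulr0 mulr0.
Qed.

Lemma rho_big (u v : bits n) : (k < weight u)%N || (k < weight v)%N -> @dicke_mix C n k lam u v = 0.
Proof.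
rewrite rho_eq => h; case: ifP => // /andP[/eqP e hk].
by move: h; rewrite -e ltnNge hk.
Qed.

Lemma rho_weight (u v u' v' : bits n) : weight u = weight u' -> weight v = weight v' ->
  @dicke_mix C n k lam u v = @dicke_mix C n k lam u' v'.
Proof. by rewrite !rho_eq => -> ->. Qed.
End Rho.

Section PT.
Variables (C : numClosedFieldType) (n : nat).

Lemma ptrace0 (M : op C n) s : ptrace set0 M s s = \sum_(c : bits n) M c c.
Proof.
rewrite /ptrace; apply: eq_big => c.
  by apply/forall_inP => j; rewrite inE.
move=> _; congr (M _ _); apply/ffunP => j; rewrite ffunE inE //.
Qed.

Definition onebits : bits n := [ffun => true].

Lemma ptrace_one (M : op C n) (T : {set 'I_n}) :
  ptrace T M onebits onebits = \sum_(w : bits n | T \subset [set l | w l]) M w w.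
Proof.
rewrite /ptrace (sum_merge T onebits (fun x => M x x)); apply: eq_bigl => w.
apply/forall_inP/subsetP => h j /h; rewrite ?inE ffunE //.
by move=> /eqP ->.
by move=> ->.
Qed.

Lemma sum_binw (M : op C n) j :
  \sum_(w : bits n) ('C(weight w, j))%:R * M w w =
  \sum_(T : {set 'I_n} | #|T| == j) ptrace T M onebits onebits.
Proof.
under [RHS]eq_bigr do rewrite ptrace_one.
rewrite [RHS](exchange_big_dep xpredT) //=; apply: eq_bigr => w _.
rewrite (eq_bigl (fun T => T \in [set T : {set 'I_n} | T \subset [set l | w l] & #|T| == j])); last by move=> T; rewrite inE andbC.
by rewrite sumr_const cards_draws mulr_natl.
Qed.

End PT.

Section Main.
Variables (C : numClosedFieldType) (n k : nat) (lam : nat -> C) (istar : nat).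
Hypotheses (hk1 : (1 <= k)%N) (hkn : (k <= n)%N) (hik : (istar <= k)%N)
  (hev : ~~ odd (k - istar)) (hlam : lam istar = 0).
Let rho := @dicke_mix C n k lam.
Variable sig : op C n.
Hypotheses (herm : forall s t, sig t s = (sig s t)^*) (psd : forall v, 0 <= qf sig v v)
  (hm : forall S : {set 'I_n}, (#|S| <= k)%N -> forall s t, ptrace S sig s t = ptrace S rho s t).

Lemma key_sum (M : op C n) : \sum_(w : bits n) (ff istar k (weight w))%:~R * M w w =
  \sum_(j < k.+1) (cf istar j)%:~R * \sum_(T : {set 'I_n} | #|T| == j) ptrace T M (onebits n) (onebits n).
Proof.
under eq_bigr do rewrite /ff rmorph_sum big_distrl /=.
rewrite exchange_big /=; apply: eq_bigr => j _.
rewrite -sum_binw big_distrr /=; apply: eq_bigr => w _.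
by rewrite rmorphM /= mulrA.
Qed.

Lemma stepA (w : bits n) : (k < weight w)%N || (weight w == istar) -> sig w w = 0.
Proof.
move=> hw.
have e : \sum_(x : bits n) (ff istar k (weight x))%:~R * sig x x =
         \sum_(x : bits n) (ff istar k (weight x))%:~R * rho x x.
  rewrite !key_sum; apply: eq_bigr => j _; congr (_ * _).
  apply: eq_bigr => T /eqP hT; apply: hm; rewrite hT; exact: (ltn_ord j).
have z : \sum_(x : bits n) (ff istar k (weight x))%:~R * rho x x = 0.
  apply: big1 => x _.
  case: (ltnP k (weight x)) => hx; first by rewrite /rho rho_big ?hx // mulr0.
  case: (eqVneq (weight x) istar) => hxi.
    by rewrite /rho rho_eq eqxx hx /= hxi hlam !mul0r mulr0.
  by rewrite ff_small // mul0r.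
rewrite z in e.
have ge : forall x : bits n, true -> 0 <= (ff istar k (weight x))%:~R * sig x x.
  by move=> x _; rewrite mulr_ge0 // ?ler0z ?ff_ge0 // (diag_ge0 psd).
have := psumr_eq0P ge e (i := w) (erefl true) => /eqP; rewrite mulf_eq0 => /orP[|/eqP //].
rewrite intr_eq0 => /eqP h0; exfalso.
case/orP: hw => hw.
  by have := ff_big hik hev hw; rewrite h0 ltxx.
by move: h0; rewrite (eqP hw) ff_i.
Qed.

Lemma stepB (u : bits n) : (k < weight u)%N || (weight u == istar) ->
  forall s, sig s u = 0 /\ sig u s = 0.
Proof.
move=> hu.
have hq : qf sig (@ev C n u) (@ev C n u) = 0 by rewrite qf_ee stepA.
have h := psd_kernel herm psd hq.
move=> s; have hs : sig s u = 0 by rewrite -(h s) sum_ev_r.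
by split=> //; rewrite herm hs conjC0.
Qed.

Lemma merge_sw (i j : 'I_n) (S : {set 'I_n}) p c : i \in S -> j \in S ->
  merge S (sw i j p) c = sw i j (merge S p c).
Proof.
move=> iS jS; apply/ffunP => l; rewrite !ffunE.
case: (boolP (l \in S)) => lS.
  by case: tpermP => [_|_|_ _]; rewrite ?iS ?jS ?lS.
case: tpermP => [e|e|_ _]; last by rewrite (negbTE lS).
  by move: lS; rewrite e iS.
by move: lS; rewrite e jS.
Qed.

Lemma X_ptrace (i j : 'I_n) (M : op C n) :
  \sum_(u : bits n) M (sw i j u) u =
  \sum_(p : bits n | [forall l, (l \notin [set i; j]) ==> ~~ p l])
     ptrace [set i; j] M (sw i j p) p.
Proof.
rewrite (sum_part [set i; j] (fun u => M (sw i j u) u)); apply: eq_bigr => p _.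
apply: eq_bigr => c _; rewrite merge_sw // !inE eqxx ?orbT //.
Qed.

Lemma stepC (i j : 'I_n) (u s : bits n) : sig s (sw i j u) = sig s u.
Proof.
case: (leqP k 1) => hk.
  have k1 : k = 1%N by lia.
  have is1 : istar = 1%N.
    move: hev hik; rewrite k1; case: istar => [|[|m]] //.
  case: (eqVneq (weight u) 0%N) => hu0.
    have e := weight0 hu0.
    have -> : sw i j u = u by rewrite e; apply/ffunP => l; rewrite !ffunE.
    by [].
  have hu : (k < weight u)%N || (weight u == istar).
    by rewrite k1 is1; case: (weight u) hu0 => [|[|m]].
  rewrite (proj1 (stepB hu s)) (proj1 (stepB _ s)) // weight_sw //.
have hS : (#|[set i; j]| <= k)%N by rewrite cards2; case: (i != j) => /=; lia.
have tr : \sum_(x : bits n) sig x x = \sum_(x : bits n) rho x x.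
  by rewrite -!(ptrace0 _ (onebits n)) hm // cards0.
have Xe : \sum_(x : bits n) sig (sw i j x) x = \sum_(x : bits n) rho (sw i j x) x.
  rewrite !X_ptrace; apply: eq_bigr => p _; exact: hm.
have Xr : \sum_(x : bits n) rho (sw i j x) x = \sum_(x : bits n) rho x x.
  by apply: eq_bigr => x _; rewrite /rho (rho_weight k lam (weight_sw i j x) (erefl (weight x))).
pose d (x : bits n) := fun y => 1 * @ev C n x y + (-1) * @ev C n (sw i j x) y.
have qd x : qf sig (d x) (d x) =
   sig x x - sig x (sw i j x) - sig (sw i j x) x + sig (sw i j x) (sw i j x).
  rewrite /d qf_comb !qf_ee rmorph1 rmorphN rmorph1; ring.
have tot : \sum_(x : bits n) qf sig (d x) (d x) = 0.
  under eq_bigr do rewrite qd.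
  rewrite !big_split /= !sumrN.
  have r1 : \sum_(x : bits n) sig (sw i j x) (sw i j x) = \sum_(x : bits n) sig x x.
    by rewrite [RHS](reindex_inj (can_inj (swK i j))).
  have r2 : \sum_(x : bits n) sig x (sw i j x) = \sum_(x : bits n) sig (sw i j x) x.
    by rewrite (reindex_inj (can_inj (swK i j))) /=; apply: eq_bigr => x _; rewrite swK.
  rewrite r1 r2 Xe tr Xr; ring.
have ge : forall x : bits n, true -> 0 <= qf sig (d x) (d x) by move=> x _; exact: psd.
have h0 := psumr_eq0P ge tot (i := u) (erefl true).
have := psd_kernel herm psd h0 s.
under eq_bigr do rewrite /d mul1r mulN1r mulrDr mulrN.
rewrite big_split /= sumrN !sum_ev_r => /eqP; rewrite subr_eq0 => /eqP.
by move=> ->.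
Qed.

Lemma sig_sw_l (i j : 'I_n) (w y : bits n) : sig (sw i j w) y = sig w y.
Proof. by rewrite herm stepC -herm. Qed.

Definition cb (a : nat) : bits n := [ffun l : 'I_n => (l < a)%N].

Lemma card_lt (a : nat) : (a <= n)%N -> #|[set l : 'I_n | (l < a)%N]| = a.
Proof.
move=> han.
have -> : [set l : 'I_n | (l < a)%N] = widen_ord han @: [set: 'I_a].
  apply/setP => l; rewrite inE; apply/idP/imsetP.
    by move=> la; exists (Ordinal la) => //; apply: val_inj.
  by case=> x _ ->; exact: ltn_ord x.
by rewrite card_imset ?cardsT ?card_ord //; by move=> x y /(congr1 val) /= /val_inj.
Qed.

Lemma weight_cb a : (a <= n)%N -> weight (cb a) = a.
Proof.
move=> han; rewrite /weight -[RHS](card_lt han).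
have -> : [set j | cb a j] = [set l : 'I_n | (l < a)%N] by apply/setP => l; rewrite !inE ffunE.
by [].
Qed.

Lemma stepD (u v : bits n) : sig u v = rho u v.
Proof.
pose D x y := sig x y - rho x y.
have DZ : forall x y : bits n, (k < weight x)%N || (k < weight y)%N -> D x y = 0.
  move=> x y hxy; rewrite /D /rho rho_big // subr0.
  case/orP: hxy => h.
    by have := stepB (_ : (k < weight x)%N || (weight x == istar)) y; rewrite h => /(_ isT) [].
  by have := stepB (_ : (k < weight y)%N || (weight y == istar)) x; rewrite h => /(_ isT) [].
have DW : forall x y x' y' : bits n, weight x = weight x' -> weight y = weight y' ->
    D x y = D x' y'.
  move=> x y x' y' ex ey; rewrite /D /rho (rho_weight k lam ex ey); congr (_ - _).
  rewrite (@sw_invariant n _ (fun z => sig z y) _ x x' ex); last first.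
    by move=> i j w; exact: sig_sw_l.
  exact: (@sw_invariant n _ (fun z => sig x' z) (fun i j w => stepC i j w x') y y' ey).
suff H : forall d (x y : bits n), (k < weight x + d)%N -> D x y = 0.
  by apply/eqP; rewrite -subr_eq0; apply/eqP; apply: (H k.+1); lia.
elim=> [|d IH] x y hd; first by apply: DZ; rewrite addn0 in hd; rewrite hd.
case: (ltnP k (weight x + d)) => hd'; first exact: IH.
set a := weight x; set b := weight y.
case: (ltnP k b) => hb; first by apply: DZ; rewrite hb orbT.
have ha : (a <= k)%N by lia.
have han : (a <= n)%N by lia.
have hbn : (b <= n)%N by lia.
rewrite (DW x y (cb a) (cb b)) ?weight_cb //.
set T := [set l : 'I_n | (l < maxn a b)%N].
have hT : (#|T| <= k)%N by rewrite card_lt; lia.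
have := hm hT (cb a) (cb b).
move=> /eqP; rewrite -subr_eq0 /ptrace -sumrB => /eqP.
have c0P : [forall l in T, [ffun => false] l == false] by apply/forall_inP => l _; rewrite ffunE.
rewrite (bigD1 _ c0P) /= big1 ?addr0.
  have mc : forall z, (z <= maxn a b)%N -> merge T (cb z) [ffun => false] = cb z.
    move=> z hz; apply/ffunP => l; rewrite !ffunE inE.
    by case: (ltnP l (maxn a b)) => hl //; apply/esym/negbTE; rewrite -leqNgt; lia.
  by rewrite !mc ?leq_maxl ?leq_maxr.
move=> c /andP[cT cne]; apply: IH.
rewrite weight_merge //; last first.
  by move=> l; rewrite ffunE inE => la; rewrite (leq_trans la) ?leq_maxl.
rewrite weight_cb //.
have : weight c != 0%N by apply: contra_neq cne => /weight0 ->.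
lia.
Qed.

Lemma det_main : forall s t, sig s t = rho s t.
Proof. exact: stepD. Qed.
End Main.

Lemma big_minn_le (I : finType) (P : pred I) (F : I -> nat) x0 i0 :
  P i0 -> (\big[minn/x0]_(i | P i) F i <= F i0)%N.
Proof.
move=> Pi0.
suff H : forall s, i0 \in s -> (\big[minn/x0]_(i <- s | P i) F i <= F i0)%N.
  exact: H (mem_index_enum i0).
elim=> // a s IH; rewrite inE big_cons => /orP[/eqP <-|h].
  by rewrite Pi0 geq_minl.
case: (P a); last exact: IH.
exact: leq_trans (geq_minr _ _) (IH h).
Qed.

Theorem mainTheorem20 (C : numClosedFieldType) (n k : nat) (lam : nat -> C) :
  (1 <= k)%N -> (k <= n)%N ->
  (forall i, (i <= k)%N -> 0 <= lam i) ->
  \sum_(i < k.+1) lam i = 1 ->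
  (exists i, [/\ (i <= k)%N, ~~ odd (k - i) & lam i = 0]) ->
  (L (@dicke_mix C n k lam) <= k)%N.
Proof.
move=> hk1 hkn _ _ [istar [hik hev hli]].
pose F0 := [set S : {set 'I_n} | (#|S| <= k)%N].
have hdet : determines (@dicke_mix C n k lam) F0.
  move=> sig [herm psd _] hm s t.
  apply: (@stepD C n k lam istar hk1 hkn hik hev hli sig herm psd) => S hS.
  by apply: hm; rewrite inE.
rewrite /L; apply: (leq_trans (@big_minn_le _ _ _ n F0 _)).
  by apply/asboolP.
apply/bigmax_leqP => S.
by rewrite inE.
Qed.
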